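(* Let $X=(x_{ij})\in\mathbb{R}^{n\times p}$ with columns $X_1,\dots,X_p$, and let $A$ be a symmetric $n\times n$ $0/1$ matrix (the adjacency matrix of a network on the $n$ rows). For a $p\times p$ matrix $B=(\beta_{kj})$ with columns $\beta_j$, a diagonal matrix $\Omega=\mathrm{diag}(\omega_1^2,\dots,\omega_p^2)$ with $\omega_j>0$, and an $n\times n$ positive definite matrix $\Theta$, define $$S=\frac1p\sum_{j=1}^p\frac{1}{\omega_j^2}(X_j-X\beta_j)(X_j-X\beta_j)^\top,\qquad L(B,\Omega,\Theta\mid X)=-n\log\det D-p\log\det\Theta+\mathrm{Tr}(\Theta S),$$ where $D=\Omega^{-1}=\mathrm{diag}(1/\omega_1^2,\dots,1/\omega_p^2)$. For a DAG $G$ on nodes $\{1,\dots,p\}$, let $(\widehat B(G),\widehat\Omega(G),\widehat\Theta(G))$ denote a minimizer of $L(B,\Omega,\Theta\mid X)$ over all $B$ with $\beta_{kj}=0$ whenever $k\to j$ is not an edge of $G$, all such positive diagonal $\Omega$, and all positive definite $\Theta$ satisfying $\Theta_{ij}=0$ whenever $i\neq j$ and $A_{ij}=0$, and $\mathrm{diag}(\Theta^{-1})=1$ (the maximum likelihood estimate given $G$). Suppose $G_1$ and $G_2$ are two Markov equivalent DAGs on the same $p$ nodes and that the maximum likelihood estimates $(\widehat B(G_m),\widehat\Omega(G_m),\widehat\Theta(G_m))$, $m=1,2$, exist for $X$. Then $$L(\widehat B(G_1),\widehat\Omega(G_1),\widehat\Theta(G_1)\mid X)=L(\widehat B(G_2),\widehat\Omega(G_2),\widehat\Theta(G_2)\mid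 X).$$
   Context: This $L$ is the negative log-likelihood (as defined in the paper) of the model in which $X_j=\sum_{k}\beta_{kj}X_k+\varepsilon_j$ with independent $\varepsilon_j\sim\mathcal{N}_n(0,\omega_j^2\Sigma)$, $\Theta=\Sigma^{-1}$, $\mathrm{diag}(\Sigma)=1$. Two DAGs are Markov equivalent if they encode the same set of conditional independence relations (equivalently, they have the same skeleton and the same v-structures). *)

(* Defs.v *)
From HB Require Import structures.
From mathcomp Require Import all_boot all_order all_algebra.
From mathcomp Require Import reals exp.
Set Implicit Arguments. Unset Strict Implicit. Unset Printing Implicit Defensive.
Import Order.TTheory GRing.Theory Num.Theory.
Local Open Scope ring_scope.

(* A directed graph on nodes 'I_p: G k j means the edge k -> j. *)
Definition is_dag (p : nat) (G : rel 'I_p) : Prop :=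
  forall x y, G x y -> ~~ connect G y x.

Definition adjacent (p : nat) (G : rel 'I_p) (x y : 'I_p) : bool := G x y || G y x.

Definition vstructure (p : nat) (G : rel 'I_p) (a c b : 'I_p) : bool :=
  [&& G a c, G b c, a != b & ~~ adjacent G a b].

Definition markov_equivalent (p : nat) (G1 G2 : rel 'I_p) : Prop :=
  (forall x y, adjacent G1 x y = adjacent G2 x y) /\
  (forall a c b, vstructure G1 a c b = vstructure G2 a c b).

Definition posdef (R : realType) (n : nat) (M : 'M[R]_n) : Prop :=
  M^T = M /\ forall v : 'rV[R]_n, v != 0 -> 0 < (v *m M *m v^T) 0 0.

Definition Smat (R : realType) (n p : nat) (X : 'M[R]_(n, p)) (B Omega : 'M[R]_p)
  : 'M[R]_n :=
  (p%:R)^-1 *: \sum_(j < p)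
     ((Omega j j)^-1 *: (col j (X - X *m B) *m (col j (X - X *m B))^T)).

Definition negloglik (R : realType) (n p : nat) (X : 'M[R]_(n, p))
  (B Omega : 'M[R]_p) (Theta : 'M[R]_n) : R :=
  - (n%:R * ln (\det (invmx Omega))) - p%:R * ln (\det Theta)
  + \tr (Theta *m Smat X B Omega).

Definition feasible (R : realType) (n p : nat) (A : 'M[R]_n) (G : rel 'I_p)
  (B Omega : 'M[R]_p) (Theta : 'M[R]_n) : Prop :=
  (forall k j, ~~ G k j -> B k j = 0) /\
  is_diag_mx Omega /\ (forall j, 0 < Omega j j) /\
  posdef Theta /\
  (forall i j, i != j -> A i j = 0 -> Theta i j = 0) /\
  (forall i, (invmx Theta) i i = 1).

Definition is_mle (R : realType) (n p : nat) (X : 'M[R]_(n, p)) (A : 'M[R]_n)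
  (G : rel 'I_p) (B Omega : 'M[R]_p) (Theta : 'M[R]_n) : Prop :=
  feasible A G B Omega Theta /\
  forall B' Omega' Theta', feasible A G B' Omega' Theta' ->
    negloglik X B Omega Theta <= negloglik X B' Omega' Theta'.

(* Main.v *)
Require Import Defs.
From HB Require Import structures.
From mathcomp Require Import all_boot all_order all_algebra.
From mathcomp Require Import reals exp.
From mathcomp Require Import ring lra zify.
Set Implicit Arguments. Unset Strict Implicit. Unset Printing Implicit Defensive.
Import Order.TTheory GRing.Theory Num.Theory.

Definition ranked (p : nat) (G : rel 'I_p) (f : 'I_p -> nat) :=
  forall a b, G a b -> f a < f b.

Lemma ranked_path (p : nat) (G : rel 'I_p) f x s :
  ranked G f -> path G x s -> f x <= f (last x s).
Proof.
move=> hf; elim: s x => [|y s IH] x //= /andP[hxy hp].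
by apply: leq_trans (IH _ hp); apply: ltnW; apply: hf.
Qed.

Lemma ranked_dag (p : nat) (G : rel 'I_p) f : ranked G f -> is_dag G.
Proof.
move=> hf x y hxy; apply/negP => /connectP [s hp hl].
have := ranked_path hf hp; rewrite -hl => h.
have := hf _ _ hxy; lia.
Qed.

Lemma dag_ranked (p : nat) (G : rel 'I_p) : is_dag G ->
  exists f, ranked G f.
Proof.
move=> hG; exists (fun a => #|[set z | connect G z a]|) => a b hab.
apply: proper_card; apply/properP; split.
  apply/subsetP => z; rewrite !inE => hz.
  by apply: connect_trans hz (connect1 hab).
exists b; rewrite !inE ?connect0 //.
exact: hG.
Qed.

Lemma ranked_irr (p : nat) (G : rel 'I_p) f a : ranked G f -> G a a = false.
Proof. by move=> hf; apply/negP => /hf; rewrite ltnn. Qed.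

Definition covered (p : nat) (G : rel 'I_p) (x y : 'I_p) :=
  forall z, G z y = (z == x) || G z x.

Definition Delta (p : nat) (G G' : rel 'I_p) :=
  [set e : 'I_p * 'I_p | G e.1 e.2 && G' e.2 e.1].

Lemma cyc3 (a b c : nat) : (a < b)%N -> (b < c)%N -> (c < a)%N -> False.
Proof. lia. Qed.
Lemma cyc2 (a b : nat) : (a < b)%N -> (b < a)%N -> False.
Proof. lia. Qed.
Lemma ltle (a b : nat) : (a < b)%N -> (b <= a)%N -> False.
Proof. lia. Qed.
Lemma ltle2 (a b c : nat) : (a < b)%N -> (b < c)%N -> (c <= a)%N -> False.
Proof. lia. Qed.

Lemma find_edge (p : nat) (G G' : rel 'I_p) :
  is_dag G -> is_dag G' -> markov_equivalent G G' -> Delta G G' != set0 ->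
  exists x y, [/\ G x y, G' y x & covered G x y].
Proof.
move=> /dag_ranked [f hf] /dag_ranked [f' hf'] [hadj hv] /set0Pn [[x0 y0]].
rewrite inE /= => hxy0.
pose P := fun y => [exists x, G x y && G' y x].
have P0 : P y0 by apply/existsP; exists x0.
case: (arg_minnP f P0) => y /existsP [x1 hx1] ymin.
pose Q := fun x => G x y && G' y x.
case: (@arg_maxnP _ x1 Q f hx1) => x /andP [hxy hyx] xmax.
exists x, y; split => // z.
have irr := ranked_irr _ hf; have irr' := ranked_irr _ hf'.
have fxy := hf _ _ hxy.
case: (eqVneq z x) => [->|hzx] /=; first by rewrite hxy.
apply/idP/idP.
- move=> hzy.
  case hzxa: (adjacent G z x).
    move: hzxa; rewrite /adjacent => /orP [//|hxz].
    have fxz := hf _ _ hxz; have fzy := hf _ _ hzy.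
    have : adjacent G' z y by rewrite -hadj /adjacent hzy.
    rewrite /adjacent => /orP [h'zy|h'yz].
      have : adjacent G' x z by rewrite -hadj /adjacent hxz.
      rewrite /adjacent => /orP [h'xz|h'zx].
        by case: (cyc3 (hf' _ _ h'xz) (hf' _ _ h'zy) (hf' _ _ hyx)).
      have Pz : P z by apply/existsP; exists x; rewrite hxz h'zx.
      by case: (ltle fzy (ymin z Pz)).
    have Qz : Q z by rewrite /Q hzy h'yz.
    by case: (ltle fxz (xmax z Qz)).
  have : vstructure G z y x by rewrite /vstructure hzy hxy hzx hzxa.
  rewrite hv /vstructure => /and4P [_ h _ _].
  by case: (cyc2 (hf' _ _ h) (hf' _ _ hyx)).
- move=> hzx'.
  have fzx := hf _ _ hzx'.
  case hzya: (adjacent G z y).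
    move: hzya; rewrite /adjacent => /orP [//|hyz].
    by case: (cyc3 (hf _ _ hyz) fzx fxy).
  have : adjacent G' z x by rewrite -hadj /adjacent hzx'.
  rewrite /adjacent => /orP [h'zx|h'xz].
    have hzy : z != y.
      by apply/eqP => hzy; subst z; case: (cyc2 fzx fxy).
    have : vstructure G' z x y by rewrite /vstructure h'zx hyx hzy -hadj hzya.
    rewrite -hv /vstructure => /and4P [_ h _ _].
    by case: (cyc2 (hf _ _ h) fxy).
  have Px : P x by apply/existsP; exists z; rewrite hzx' h'xz.
  by case: (ltle fxy (ymin x Px)).
Qed.

Definition rev_edge (p : nat) (G : rel 'I_p) (x y : 'I_p) : rel 'I_p :=
  fun a b => ((a == y) && (b == x)) || (G a b && ~~ ((a == x) && (b == y))).

Lemma rev_ranked (p : nat) (G : rel 'I_p) f x y :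
  ranked G f -> G x y -> covered G x y ->
  ranked (rev_edge G x y) (fun z => if z == y then (f x).*2 else if z == x then (f x).*2.+1 else (f z).*2).
Proof.
move=> hf hxy hcov a b; rewrite /rev_edge.
have fxy := hf _ _ hxy.
have hyx : y != x by apply/eqP => e; subst y; have := hf _ _ hxy; rewrite ltnn.
have hxy' : x != y by rewrite eq_sym.
case/orP => [/andP [/eqP -> /eqP ->]|/andP [hab hn]].
  by rewrite eqxx (negbTE hxy') eqxx ltnSn.
have fab := hf _ _ hab.
case: (eqVneq a y) => [ea|nay]; case: (eqVneq a x) => [eax|nax];
 case: (eqVneq b y) => [eb|nby]; case: (eqVneq b x) => [ebx|nbx]; subst;
 rewrite ?eqxx ?(negbTE hyx) ?(negbTE hxy') ?(negbTE nay) ?(negbTE nax)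
   ?(negbTE nby) ?(negbTE nbx) /= in hn *; try lia.
- move: hab; rewrite hcov (negbTE nax) /= => /hf; lia.
Qed.

Lemma rev_me (p : nat) (G : rel 'I_p) f x y :
  ranked G f -> G x y -> covered G x y ->
  markov_equivalent G (rev_edge G x y).
Proof.
move=> hf hxy hcov.
have irr := ranked_irr _ hf.
have fxy := hf _ _ hxy.
have hyx : y != x by apply/eqP => e; subst y; rewrite irr in hxy.
have Gyx : G y x = false by apply/negP => /hf; lia.
have hxy' : x != y by rewrite eq_sym.
have hadj : forall a b, adjacent G a b = adjacent (rev_edge G x y) a b.
  move=> a b; rewrite /adjacent /rev_edge.
  case: (eqVneq a y) => [ea|nay]; case: (eqVneq a x) => [eax|nax];
  case: (eqVneq b y) => [eb|nby]; case: (eqVneq b x) => [ebx|nbx]; subst;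
  rewrite ?eqxx ?irr ?hxy ?Gyx ?(negbTE hyx) ?(negbTE hxy') ?(negbTE nax) ?(negbTE nay)
     ?(negbTE nbx) ?(negbTE nby) ?andbT ?andbF ?orbF //=.
  all: try by move: hyx; rewrite eqxx.
split => // a c b; rewrite /vstructure -hadj /rev_edge.
case: (eqVneq c y) => [->|ncy]; last case: (eqVneq c x) => [->|ncx].
- rewrite (negbTE hyx) !andbF /= !andbT.
  case: (eqVneq a x) => [->|nax]; case: (eqVneq b x) => [->|nbx];
    rewrite ?hxy ?andbF ?andbT ?eqxx //=.
  + rewrite hcov (negbTE nbx) /=; case hbx: (G b x) => //=.
    by rewrite /adjacent hbx orbT.
  + rewrite hcov (negbTE nax) /=; case hax: (G a x) => //=.
    by rewrite /adjacent hax /= ?andbF.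
- rewrite ?andbF /= ?andbT ?orbF.
  case: (eqVneq a y) => [->|nay]; case: (eqVneq b y) => [->|nby];
    rewrite ?Gyx ?andbF ?andbT ?eqxx //=.
  + case hbx: (G b x) => //=.
    by rewrite /adjacent (hcov b) hbx !orbT.
  + case hax: (G a x) => //=.
    by rewrite /adjacent (hcov a) hax !orbT andbF.
- by rewrite !andbF /= !andbT.
Qed.




Lemma delta_dec (p : nat) (G G' : rel 'I_p) f' x y :
  ranked G' f' -> G x y -> G' y x ->
  #|Delta (rev_edge G x y) G'| < #|Delta G G'|.
Proof.
move=> hf' hxy hyx; apply: proper_card; apply/properP; split.
  apply/subsetP => [[a b]]; rewrite !inE /rev_edge /=.
  case/andP => /orP [/andP [/eqP ea /eqP eb]|/andP [hab _]] h'.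
    by subst; have := hf' _ _ h'; have := hf' _ _ hyx; lia.
  by rewrite hab h'.
have hyx' : ~~ G' x y by apply/negP => h; have := hf' _ _ h; have := hf' _ _ hyx; lia.
exists (x, y); first by rewrite !inE /= hxy hyx.
have hne : x != y by apply/eqP => e; subst; have := hf' _ _ hyx; lia.
by rewrite !inE /= /rev_edge (negbTE hne) !eqxx /= andbF.
Qed.

Lemma delta0 (p : nat) (G G' : rel 'I_p) :
  markov_equivalent G G' -> Delta G G' = set0 -> forall a b, G' a b = G a b.
Proof.
move=> [hadj _] h0 a b.
have nd : forall u v, G u v -> G' v u -> False.
  move=> u v h1 h2; have : (u, v) \in Delta G G' by rewrite inE /= h1 h2.
  by rewrite h0 inE.
apply/idP/idP => h.
  have : adjacent G a b by rewrite hadj /adjacent h.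
  by rewrite /adjacent => /orP [//|hba]; case: (nd _ _ hba h).
have : adjacent G' a b by rewrite -hadj /adjacent h.
by rewrite /adjacent => /orP [//|hba]; case: (nd _ _ h hba).
Qed.

Local Open Scope ring_scope.

Definition supp (R : realType) (p : nat) (G : rel 'I_p) (B : 'M[R]_p) :=
  forall k j, ~~ G k j -> B k j = 0.
Definition posdiag (R : realType) (p : nat) (Om : 'M[R]_p) :=
  is_diag_mx Om /\ forall j, 0 < Om j j.
Definition Ksum (R : realType) (p : nat) (B Om : 'M[R]_p) : 'M[R]_p :=
  \sum_(j < p) (Om j j)^-1 *: (col j (1%:M - B) *m (col j (1%:M - B))^T).

Lemma diagE (R : realType) (p : nat) (Om : 'M[R]_p) :
  is_diag_mx Om -> Om = diag_mx (\row_j Om j j).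
Proof.
move=> /is_diag_mxP hd; apply/matrixP => i j; rewrite !mxE.
case: (eqVneq i j) => [->|nij]; first by rewrite mulr1n.
by rewrite mulr0n hd //.
Qed.

Lemma sum2 (V : zmodType) (p : nat) (x y : 'I_p) (F : 'I_p -> V) : y != x ->
  \sum_j F j = F x + F y + \sum_(j | (j != x) && (j != y)) F j.
Proof.
move=> hyx; by rewrite (bigD1 x) //= (bigD1 y) //= addrA.
Qed.

Lemma prod2 (V : comNzRingType) (p : nat) (x y : 'I_p) (F : 'I_p -> V) : y != x ->
  \prod_j F j = F x * F y * \prod_(j | (j != x) && (j != y)) F j.
Proof.
move=> hyx; by rewrite (bigD1 x) //= (bigD1 y) //= mulrA.
Qed.

Lemma cov_step (R : realType) (p : nat) (G : rel 'I_p) f x y (B Om : 'M[R]_p) :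
  ranked G f -> G x y -> covered G x y -> supp G B -> posdiag Om ->
  exists B' Om', [/\ supp (rev_edge G x y) B', posdiag Om',
     Ksum B' Om' = Ksum B Om & \det Om' = \det Om].
Proof.
move=> hf hxy hcov hB [hd hpos].
have irr := ranked_irr _ hf.
have hyx : y != x by apply/eqP => e; subst y; rewrite irr in hxy.
have hxy' : x != y by rewrite eq_sym.
have Gyx : G y x = false by apply/negP => /hf; have := hf _ _ hxy; lia.
pose b := B x y.
pose m := (Om x x)^-1 + (Om y y)^-1 * b ^+ 2.
pose t := (Om y y)^-1 * b / m.
have hm : 0 < m.
  by rewrite /m ltr_wpDr ?invr_gt0 // mulr_ge0 ?invr_ge0 ?sqr_ge0 ?ltW.
pose By := fun k => B k y - b * (k == x)%:R + b * B k x.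
pose B' := \matrix_(k, j) if j == y then By k else if j == x then
   B k x + t * ((k == y)%:R - By k) else B k j.
pose Om' := diag_mx (\row_j (if j == x then m^-1 else if j == y then m * (Om x x * Om y y) else Om j j)).
exists B', Om'; split.
- move=> k j; rewrite /rev_edge !mxE negb_or negb_and => /andP [h1 h2].
  have Bxx : B x x = 0 by apply: hB; rewrite irr.
  have Bx : forall k, k != x -> ~~ G k x -> By k = 0.
    move=> k' nk hk; rewrite /By (negbTE nk) mulr0 subr0 (hB _ _ hk) mulr0 addr0.
    by apply: hB; rewrite hcov (negbTE nk).
  have Bxy : By x = 0 by rewrite /By eqxx Bxx mulr1 mulr0 addr0 subrr.
  case: (eqVneq j y) => [ej|njy].
    subst j; move: h2; rewrite eqxx andbT.
    case: (eqVneq k x) => [-> _|nkx]; first exact: Bxy.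
    rewrite andbT => hk.
    by apply: Bx => //; move: hk; rewrite hcov (negbTE nkx).
  case: (eqVneq j x) => [ej|njx].
    subst j; move: h1 h2; rewrite eqxx orbF (negbTE hxy') andbF andbT => nky hk.
    rewrite (negbTE nky) (hB _ _ hk) add0r.
    case: (eqVneq k x) => [->|nkx]; first by rewrite Bxy subr0 mulr0.
    by rewrite Bx // subr0 mulr0.
  by apply: hB; move: h2; rewrite (negbTE njy) andbF andbT.
- split; first exact: diag_mx_is_diag.
  move=> j; rewrite !mxE eqxx mulr1n.
  case: (eqVneq j x) => _; first by rewrite invr_gt0.
  case: (eqVneq j y) => _ //.
  by rewrite mulr_gt0 // mulr_gt0.
- rewrite /Ksum (sum2 _ hyx) [RHS](sum2 _ hyx).
  congr (_ + _); last first.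
    apply: eq_bigr => j /andP [njx njy].
    have e1 : Om' j j = Om j j by rewrite !mxE eqxx mulr1n (negbTE njx) (negbTE njy).
    have e2 : col j (1%:M - B') = col j (1%:M - B).
      by apply/matrixP => i k; rewrite !mxE (negbTE njx) (negbTE njy).
    by rewrite e1 e2.
  apply/matrixP => i k; rewrite !mxE !big_ord1 !mxE.
  rewrite !eqxx (negbTE hyx) (negbTE hxy') !mulr1n.
  have hm0 : m != 0 by rewrite gt_eqF.
  have hx0 : Om x x != 0 by rewrite gt_eqF.
  have hy0 : Om y y != 0 by rewrite gt_eqF.
  move: hm0; rewrite /By /t /m /b => hm0.
  field; rewrite ?hx0 ?hy0 ?hm0 //=.
  apply: lt0r_neq0; apply: (@lt_le_trans _ _ (Om y y)) => //; rewrite lerDl mulr_ge0 ?sqr_ge0 ?ltW //.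
- rewrite /Om' det_diag [in RHS](diagE hd) det_diag (prod2 _ hyx) [RHS](prod2 _ hyx).
  rewrite !mxE !eqxx (negbTE hyx) /=.
  rewrite !mulrA; congr (_ * _).
    rewrite mulVf ?mul1r //.
    by rewrite gt_eqF.
  by apply: eq_bigr => j /andP [njx njy]; rewrite !mxE (negbTE njx) (negbTE njy).
Qed.

Lemma me_sym (p : nat) (G G' : rel 'I_p) :
  markov_equivalent G G' -> markov_equivalent G' G.
Proof. by case=> h1 h2; split=> *; rewrite ?h1 ?h2. Qed.

Lemma me_trans (p : nat) (G1 G2 G3 : rel 'I_p) :
  markov_equivalent G1 G2 -> markov_equivalent G2 G3 -> markov_equivalent G1 G3.
Proof. by case=> h1 h2 [h3 h4]; split=> *; rewrite ?h1 ?h2 ?h3 ?h4. Qed.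

Lemma transfer (R : realType) (p n : nat) : forall (G G' : rel 'I_p),
  (#|Delta G G'| <= n)%N -> is_dag G -> is_dag G' -> markov_equivalent G G' ->
  forall (B Om : 'M[R]_p), supp G B -> posdiag Om ->
  exists B' Om', [/\ supp G' B', posdiag Om', Ksum B' Om' = Ksum B Om
     & \det Om' = \det Om].
Proof.
elim: n => [|n IH] G G' hn hG hG' hme B Om hB hOm;
  (case: (eqVneq (Delta G G') set0) => [e0|ne0];
   [exists B, Om; split => //; move=> k j; rewrite (delta0 hme e0); exact: hB|]).
  by move: hn; rewrite leqn0 cards_eq0 (negbTE ne0).
have [x [y [hxy hyx hcov]]] := find_edge hG hG' hme ne0.
have [f hf] := dag_ranked hG.
have [f' hf'] := dag_ranked hG'.
have [B1 [Om1 [hB1 hOm1 hK1 hd1]]] := cov_step hf hxy hcov hB hOm.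
have hG1 := ranked_dag (rev_ranked hf hxy hcov).
have hme1 : markov_equivalent (rev_edge G x y) G'.
  exact: me_trans (me_sym (rev_me hf hxy hcov)) hme.
have hn1 : (#|Delta (rev_edge G x y) G'| <= n)%N.
  by have := delta_dec hf' hxy hyx; move: hn; clear; lia.
have [B2 [Om2 [hB2 hOm2 hK2 hd2]]] := IH _ _ hn1 hG1 hG' hme1 _ _ hB1 hOm1.
by exists B2, Om2; split => //; rewrite ?hK2 ?hd2.
Qed.

Lemma col_mulmx (R : realType) (n p : nat) (X : 'M[R]_(n, p)) (M : 'M[R]_p) j :
  col j (X *m M) = X *m col j M.
Proof.
apply/matrixP => i k; rewrite !mxE; apply: eq_bigr => l _; by rewrite !mxE.
Qed.

Lemma Smat_K (R : realType) (n p : nat) (X : 'M[R]_(n, p)) (B Om : 'M[R]_p) :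
  Smat X B Om = (p%:R)^-1 *: (X *m Ksum B Om *m X^T).
Proof.
rewrite /Smat /Ksum; congr (_ *: _).
rewrite mulmx_sumr mulmx_suml; apply: eq_bigr => j _.
have -> : X - X *m B = X *m (1%:M - B) by rewrite mulmxBr mulmx1.
rewrite col_mulmx trmx_mul -scalemxAr -scalemxAl !mulmxA.
done.
Qed.

Lemma nll_eq (R : realType) (n p : nat) (X : 'M[R]_(n, p)) (B Om B' Om' : 'M[R]_p) Th :
  Ksum B' Om' = Ksum B Om -> \det Om' = \det Om ->
  negloglik X B' Om' Th = negloglik X B Om Th.
Proof.
by move=> hK hd; rewrite /negloglik !det_inv hd !Smat_K hK.
Qed.

Unset Implicit Arguments.

Lemma key (R : realType) (n p : nat) (X : 'M[R]_(n, p)) (A : 'M[R]_n)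
  (G G' : rel 'I_p) (B Om : 'M[R]_p) (Th : 'M[R]_n) :
  is_dag G -> is_dag G' -> markov_equivalent G G' -> feasible A G B Om Th ->
  exists B' Om', feasible A G' B' Om' Th /\ negloglik X B' Om' Th = negloglik X B Om Th.
Proof.
move=> hG hG' hme [hB [hd [hpos rest]]].
have [B' [Om' [hB' [hd' hpos'] hK hdet]]] :=
  @transfer R p _ G G' (leqnn _) hG hG' hme B Om hB (conj hd hpos).
exists B', Om'; split; first by [].
exact: nll_eq.
Qed.

Theorem theorem1 (R : realType) (n p : nat) (X : 'M[R]_(n, p)) (A : 'M[R]_n)
  (hA01 : forall i j, A i j = 0 \/ A i j = 1) (hAsym : A^T = A)
  (G1 G2 : rel 'I_p) (hG1 : is_dag G1) (hG2 : is_dag G2)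
  (hME : markov_equivalent G1 G2)
  (B1 Omega1 : 'M[R]_p) (Theta1 : 'M[R]_n)
  (B2 Omega2 : 'M[R]_p) (Theta2 : 'M[R]_n)
  (hmle1 : is_mle X A G1 B1 Omega1 Theta1)
  (hmle2 : is_mle X A G2 B2 Omega2 Theta2) :
  negloglik X B1 Omega1 Theta1 = negloglik X B2 Omega2 Theta2.
Proof.
case: hmle1 => hf1 hm1; case: hmle2 => hf2 hm2.
apply/eqP; rewrite eq_le; apply/andP; split.
  have [B' [Om' [hf' he]]] := key R n p X A G2 G1 B2 Omega2 Theta2 hG2 hG1 (me_sym hME) hf2.
  by rewrite -he; apply: hm1.
have [B' [Om' [hf' he]]] := key R n p X A G1 G2 B1 Omega1 Theta1 hG1 hG2 hME hf1.
by rewrite -he; apply: hm2.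
Qed.
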